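(* Let $H=([0,\infty],\le,u,\bullet)$ be a partially ordered monoid on the extended non-negative reals (with the usual order), and let $(d_X)_X$ be an $H$-composable family of divergences, $d_X:D X\times D X\to[0,\infty]$, indexed by sets $X$. For $\delta\in[0,\infty]$ and a set $X$ define $$R(d)(\delta)(X)=(D X,\{(\mu,\nu): d_X(\mu,\nu)\le\delta,\ d_X(\nu,\mu)\le\delta\}).$$ Then $R(d)$ is a monotone map $([0,\infty],\le)\to\mathbf{Ord}(q,D)$ and is an $H$-graded $\times$-parameterized assignment of $\mathsf{RSRel}$ on the distribution monad $\mathcal{D}$; i.e. for all sets $X,Y$, all $\alpha,\beta\in[0,\infty]$, all $h,h':X\to D Y$ with $h(x)\sim_{R(d)(\alpha)(Y)}h'(x)$ for every $x$, and all $\mu\sim_{R(d)(\beta)(X)}\nu$, we have $h^\dagger(\mu)\sim_{R(d)(\beta\bullet\alpha)(Y)}h'^\dagger(\nu)$.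
   Context: $D X$ is the set of discrete probability distributions on $X$; for $f:X\to D Y$, $f^\dagger(\mu)(y)=\sum_x f(x)(y)\mu(x)$. A divergence on $D X$ is a function $d_X:D X\times D X\to[0,\infty]$ with $d_X(\mu,\mu)=0$ (it need not be symmetric nor satisfy the triangle inequality). The family $(d_X)$ is $H$-composable if for all sets $X,Y$, all $f,g:X\to D Y$ and $\mu,\nu\in D X$: $d_Y(f^\dagger(\mu),g^\dagger(\nu))\le d_X(\mu,\nu)\bullet\sup_{x\in X}d_Y(f(x),g(x))$. $\mathsf{RSRel}$ is the category of sets with a reflexive symmetric relation and relation-preserving maps; $q$ its forgetful functor to $\mathsf{Set}$; $\mathbf{Ord}(q,D)$ is the class of maps assigning to each set $X$ a reflexive symmetric relation on $D X$, preordered by pointwise inclusion. In $\mathsf{RSRel}$, product relates pairs componentwise, and for a set $X$ and object $Z$, $X\dot\pitchfork Z$ is the set of functions $X\to|Z|$ with $h\sim h'$ iff $h(x)\sim h'(x)$ for all $x$; an $H$-graded $\times$-parameterized assignment $\Delta$ is a monotone map from $H$ to $\mathbf{Ord}(q,D)$ such that $(h,\mu)\mapsto h^\dagger(\mu)$ is relation-preserving $(X\dot\pitchfork\Delta\alpha Y)\times\Delta\beta X\to\Delta(\beta\bullet\alpha)Y$. *)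

(* Defs.v *)
From HB Require Import structures.
From mathcomp Require Import all_boot all_order all_algebra.
From mathcomp Require Import boolp classical_sets reals ereal esum.
Set Implicit Arguments. Unset Strict Implicit. Unset Printing Implicit Defensive.
Import Order.TTheory GRing.Theory Num.Theory.
Local Open Scope classical_set_scope.
Local Open Scope ring_scope.
Local Open Scope ereal_scope.

Definition tsum (R : realType) (X : Type) (a : X -> \bar R) : \bar R :=
  @esum R {classic X} setT a.

(* A discrete probability distribution on X, represented by its mass
   function mu : X -> R: non-negative masses summing to 1
   (this forces countable support). D X = [set mu | isDistr mu]. *)
Definition isDistr (R : realType) (X : Type) (mu : X -> R) : Prop :=
  (forall x, (0 <= mu x)%R) /\ tsum (fun x => (mu x)%:E) = 1.

Definition kext (R : realType) (X Y : Type) (f : X -> Y -> R) (mu : X -> R)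
  : Y -> R :=
  fun y => fine (tsum (fun x => (f x y * mu x)%:E)).

Definition divergence_family (R : realType)
  (d : forall X : Type, (X -> R) -> (X -> R) -> \bar R) : Prop :=
  forall (X : Type) (mu nu : X -> R), isDistr mu -> isDistr nu ->
    0 <= d X mu nu /\ d X mu mu = 0.

Definition pomonoid_ext (R : realType) (u : \bar R)
  (bullet : \bar R -> \bar R -> \bar R) : Prop :=
  [/\ 0 <= u,
      (forall a b, 0 <= a -> 0 <= b -> 0 <= bullet a b),
      (forall a b c, 0 <= a -> 0 <= b -> 0 <= c ->
          bullet (bullet a b) c = bullet a (bullet b c)),
      (forall a, 0 <= a -> bullet u a = a /\ bullet a u = a) &
      (forall a a' b b', 0 <= a -> 0 <= b -> a <= a' -> b <= b' ->
          bullet a b <= bullet a' b')].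

(* H-composability of the family d.  The sup is taken in [0,oo]
   (hence the extra 0, relevant only for empty X). *)
Definition H_composable (R : realType) (bullet : \bar R -> \bar R -> \bar R)
  (d : forall X : Type, (X -> R) -> (X -> R) -> \bar R) : Prop :=
  forall (X Y : Type) (f g : X -> Y -> R) (mu nu : X -> R),
    (forall x, isDistr (f x)) -> (forall x, isDistr (g x)) ->
    isDistr mu -> isDistr nu ->
    d Y (kext f mu) (kext g nu)
      <= bullet (d X mu nu) (ereal_sup ([set 0] `|` [set d Y (f x) (g x) | x in setT])).

Definition Rd (R : realType)
  (d : forall X : Type, (X -> R) -> (X -> R) -> \bar R)
  (delta : \bar R) (X : Type) (mu nu : X -> R) : Prop :=
  isDistr mu /\ isDistr nu /\ d X mu nu <= delta /\ d X nu mu <= delta.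

(* Main.v *)
Require Import Defs.
From HB Require Import structures.
From mathcomp Require Import all_boot all_order all_algebra.
From mathcomp Require Import boolp classical_sets reals ereal esum.
From mathcomp Require Import fsbigop.
Import Order.TTheory GRing.Theory Num.Theory.
Local Open Scope classical_set_scope.
Local Open Scope ring_scope.
Local Open Scope ereal_scope.

Lemma esumZl (R : realType) (T : choiceType) (S : set T) (a : T -> \bar R) (c : R) :
  (0 <= c)%R -> (forall x, 0 <= a x) ->
  \esum_(i in S) (c%:E * a i) = c%:E * \esum_(i in S) a i.
Proof.
move=> c0 a0; rewrite /esum -ereal_supZl //; last first.
  by apply/set0P; exists 0; exists set0; [exact: fsets_set0|rewrite fsbig_set0].
congr ereal_sup; rewrite image_comp; apply: eq_imagel => A _ /=.
by rewrite ge0_mule_fsumr.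
Qed.

Lemma kext_distr (R : realType) (X Y : Type) (h : X -> Y -> R) (mu : X -> R) :
  (forall x, isDistr (h x)) -> isDistr mu -> isDistr (kext h mu).
Proof.
move=> hD [mu0 mu1].
have a0 : forall x y, 0 <= ((h x y * mu x)%:E : \bar R).
  by move=> x y; rewrite lee_fin mulr_ge0 //; case: (hD x).
pose S y := tsum (fun x => (h x y * mu x)%:E).
have S0 : forall y, 0 <= S y by move=> y; apply: esum_ge0.
have tot : tsum S = 1.
  rewrite /tsum /S /tsum.
  rewrite (@esum_esum R {classic Y} {classic X} setT (fun _ => setT)
     (fun y x => (h x y * mu x)%:E)); last by [].
  rewrite (reindex_esum (setT `*`` (fun _ : {classic X} => @setT {classic Y}))
     (setT `*`` (fun _ : {classic Y} => @setT {classic X})) (fun k => (k.2, k.1))); last first.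
    split.
    - by move=> [a b] _.
    - by move=> [a b] [c e] _ _ /= [-> ->].
    - by move=> [a b] _; exists (b, a).
  rewrite -(@esum_esum R {classic X} {classic Y} setT (fun _ => setT)
     (fun x y => (h x y * mu x)%:E)); last by [].
  rewrite -mu1; apply: eq_esum => x _ /=.
  under eq_esum do rewrite mulrC EFinM.
  rewrite esumZl //; last by move=> y; rewrite lee_fin; case: (hD x).
  by case: (hD x) => _; rewrite /tsum => ->; rewrite mule1.
have Sle : forall y, S y <= 1.
  move=> y; rewrite -tot; apply: esum_ge; exists [set y].
    by split; [exact: cardinality.finite_set1|].
  by rewrite fsbig_set1.
have Sfin : forall y, (fine (S y))%:E = S y.
  move=> y; apply: fineK; apply/fin_numP; split.
  - by apply/negP => /eqP E; have := S0 y; rewrite E.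
  - by apply/negP => /eqP E; have := Sle y; rewrite E.
split.
  by move=> y; rewrite /kext -lee_fin Sfin.
rewrite -tot /tsum; apply: eq_esum => y _; exact: Sfin.
Qed.

Lemma sup_le (R : realType) (X Y : Type) (d : forall X : Type, (X -> R) -> (X -> R) -> \bar R)
  (h h' : X -> Y -> R) (alpha : \bar R) :
  0 <= alpha -> (forall x, d Y (h x) (h' x) <= alpha) ->
  0 <= ereal_sup ([set 0] `|` [set d Y (h x) (h' x) | x in setT]) /\
  ereal_sup ([set 0] `|` [set d Y (h x) (h' x) | x in setT]) <= alpha.
Proof.
move=> a0 hb; split.
  by apply: ereal_sup_ubound; left.
apply: ge_ereal_sup => z [->|[x _ <-]] //.
Qed.

Theorem theorem7 (R : realType) (u : \bar R)
  (bullet : \bar R -> \bar R -> \bar R)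
  (d : forall X : Type, (X -> R) -> (X -> R) -> \bar R) :
  pomonoid_ext u bullet ->
  divergence_family d ->
  H_composable bullet d ->
  (* each R(d)(delta)(X) is a reflexive symmetric relation on D X *)
  (forall (delta : \bar R) (X : Type), 0 <= delta ->
     (forall mu : X -> R, isDistr mu -> Rd d delta mu mu) /\
     (forall mu nu : X -> R, Rd d delta mu nu -> Rd d delta nu mu)) /\
  (* monotonicity in delta *)
  (forall (delta delta' : \bar R) (X : Type) (mu nu : X -> R),
     0 <= delta -> delta <= delta' ->
     Rd d delta mu nu -> Rd d delta' mu nu) /\
  (* H-graded x-parameterized assignment *)
  (forall (X Y : Type) (alpha beta : \bar R) (h h' : X -> Y -> R)
          (mu nu : X -> R),
     0 <= alpha -> 0 <= beta ->
     (forall x, Rd d alpha (h x) (h' x)) ->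
     Rd d beta mu nu ->
     Rd d (bullet beta alpha) (kext h mu) (kext h' nu)).
Proof.
move=> [_ _ _ _ bmono] dfam Hc; split; [|split].
- move=> delta X d0; split.
    by move=> mu muD; have [_ dz] := dfam X mu mu muD muD; rewrite /Rd dz.
  by move=> mu nu [? [? [? ?]]].
- move=> delta delta' X mu nu _ le [? [? [? ?]]]; split => //; split => //.
  by split; apply: le_trans le.
- move=> X Y alpha beta h h' mu nu a0 b0 hR [muD [nuD [d1 d2]]].
  have hD x : isDistr (h x) by case: (hR x).
  have h'D x : isDistr (h' x) by case: (hR x) => _ [].
  have [s10 s1] := @sup_le R X Y d h h' alpha a0 (fun x => proj1 (proj2 (proj2 (hR x)))).
  have [s20 s2] := @sup_le R X Y d h' h alpha a0 (fun x => proj2 (proj2 (proj2 (hR x)))).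
  split; first exact: kext_distr.
  split; first exact: kext_distr.
  split.
    apply: le_trans (Hc X Y h h' mu nu hD h'D muD nuD) _.
    by apply: bmono => //; case: (dfam X mu nu muD nuD).
  apply: le_trans (Hc X Y h' h nu mu h'D hD nuD muD) _.
  by apply: bmono => //; case: (dfam X nu mu nuD muD).
Qed.
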